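(* Let $\mathcal{T}$ be the set of infinite sequences $\mathbf{k}=(k_1,k_2,\ldots)$ of positive integers with $k_1\geq 2$, $k_i\geq 1$ for $i\geq 2$, and such that if $k_1=2$ then $k_s\geq 2$ for some $s\geq 2$. (i) For every $\mathbf{k}\in\mathcal{T}$ the limit $\lim_{r\to\infty}\zeta^{\star}(k_1,\ldots,k_r)$ exists and is $>1$. (ii) The map $\eta:\mathcal{T}\to(1,+\infty)$, $\eta(\mathbf{k})=\lim_{r\to\infty}\zeta^{\star}(k_1,\ldots,k_r)$, is bijective. Moreover, defining $\mathbf{k}\succ\mathbf{m}$ for $\mathbf{k},\mathbf{m}\in\mathcal{T}$ to mean that there is $j\geq 0$ with $k_i=m_i$ for $1\leq i\leq j$ and $k_{j+1}<m_{j+1}$, we have $\mathbf{k}\succ\mathbf{m}$ if and only if $\eta(\mathbf{k})>\eta(\mathbf{m})$. (iii) Let $\mathcal{Z}^{\star}$ be the set of all multiple zeta-star values. Then for every $n\geq 1$, the $n$-th derived set of $\mathcal{Z}^{\star}$ equals $[1,+\infty)$.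
   Context: For integers $k_1\geq 2$, $k_2,\ldots,k_r\geq 1$ ($r\geq1$), $\zeta^{\star}(k_1,\ldots,k_r)=\sum_{n_1\geq\cdots\geq n_r\geq 1}\frac{1}{n_1^{k_1}\cdots n_r^{k_r}}$; $\mathcal{Z}^{\star}$ is the set of all such values. For $\mathcal{C}\subseteq\mathbb{R}$, $\mathcal{C}'$ is its set of accumulation points, $\mathcal{C}^{(1)}=\mathcal{C}'$ and $\mathcal{C}^{(n+1)}=(\mathcal{C}^{(n)})'$. *)

(* Defs.v *)
From Stdlib Require Import Reals Lra Lia List.
From Coquelicot Require Import Coquelicot.
Open Scope R_scope.

(* zfin [k1;...;kr] N = sum over N >= n1 >= n2 >= ... >= nr >= 1 of
   1/(n1^k1 ... nr^kr)   (zfin [] N = 1). *)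
Fixpoint zfin (ks : list nat) (N : nat) {struct ks} : R :=
  match ks with
  | nil => 1
  | k :: ks' =>
      (fix s (M : nat) : R :=
         match M with
         | O => 0
         | S n => s n + / (INR (S n) ^ k) * zfin ks' (S n)
         end) N
  end.

Definition zeta_star (ks : list nat) : R := real (Lim_seq (zfin ks)).

Definition admissible (ks : list nat) : Prop :=
  match ks with
  | nil => False
  | k1 :: _ => (2 <= k1)%nat /\ (forall k, List.In k ks -> (1 <= k)%nat)
  end.

Definition Zstar (x : R) : Prop :=
  exists ks, admissible ks /\ x = zeta_star ks.

Definition derived (C : R -> Prop) (x : R) : Prop :=
  forall eps : R, 0 < eps -> exists y, C y /\ y <> x /\ Rabs (y - x) < eps.

Fixpoint derived_n (n : nat) (C : R -> Prop) : R -> Prop :=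
  match n with
  | O => C
  | S m => derived (derived_n m C)
  end.

(* Infinite sequences k = (k_1, k_2, ...) are encoded as k : nat -> nat with
   k 0 = k_1, k 1 = k_2, ...; prefix k r = [k_1; ...; k_r]. *)
Definition prefix (k : nat -> nat) (r : nat) : list nat := map k (seq 0%nat r).

Definition inT (k : nat -> nat) : Prop :=
  (2 <= k 0%nat)%nat /\ (forall i, (1 <= k i)%nat) /\
  (k 0%nat = 2%nat -> exists s, (1 <= s)%nat /\ (2 <= k s)%nat).

Definition eta (k : nat -> nat) : R :=
  real (Lim_seq (fun r => zeta_star (prefix k r))).

(* k > m : exists j >= 0 with k_i = m_i for 1 <= i <= j and k_{j+1} < m_{j+1}
   (0-indexed below). *)
Definition succ_lex (k m : nat -> nat) : Prop :=
  exists j : nat, (forall i, (i < j)%nat -> k i = m i) /\ (k j < m j)%nat.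

(* Main.v *)
Require Import Defs.
From Stdlib Require Import Reals.
From Coquelicot Require Import Coquelicot.
From Stdlib Require Import Lra Lia List Classical ClassicalEpsilon.
Open Scope R_scope.

Definition w (k n : nat) : R := / (INR n ^ k).

Fixpoint ssum (f : nat -> R) (N : nat) : R :=
  match N with O => 0 | S n => ssum f n + f (S n) end.

Fixpoint zg (p : list nat) (g : nat -> R) (N : nat) : R :=
  match p with
  | nil => g N
  | k :: p' => ssum (fun n => w k n * zg p' g n) N
  end.

Lemma ssum_ext f h N : (forall n, (1 <= n <= N)%nat -> f n = h n) -> ssum f N = ssum h N.
Proof.
  induction N; intros H; simpl; auto.
  rewrite IHN by (intros; apply H; lia). rewrite (H (S N)) by lia. auto.
Qed.

Lemma ssum_le f h N : (forall n, (1 <= n <= N)%nat -> f n <= h n) -> ssum f N <= ssum h N.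
Proof.
  induction N; intros H; simpl; [lra|].
  assert (ssum f N <= ssum h N) by (apply IHN; intros; apply H; lia).
  assert (f (S N) <= h (S N)) by (apply H; lia). lra.
Qed.

Lemma ssum_lin a f h N : ssum (fun n => a * f n + h n) N = a * ssum f N + ssum h N.
Proof. induction N; simpl; [ring|]. rewrite IHN. ring. Qed.

Lemma ssum_const c N : ssum (fun _ => c) N = c * INR N.
Proof. induction N; [simpl; ring|]. change (ssum (fun _ => c) (S N)) with (ssum (fun _ => c) N + c). rewrite IHN, S_INR; ring. Qed.

Lemma ssum_nonneg f N : (forall n, (1 <= n <= N)%nat -> 0 <= f n) -> 0 <= ssum f N.
Proof.
  intros H. replace 0 with (ssum (fun _ => 0) N).
  apply ssum_le; auto. rewrite ssum_const; ring.
Qed.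

Lemma ssum_lin_bound f c n : (forall m, (2 <= m <= n)%nat -> f m <= c) -> f 1%nat <= 0 ->
  (1 <= n)%nat -> ssum f n <= c * (INR n - 1).
Proof.
  intros H H1 Hn. induction n; [lia|].
  destruct n. simpl. lra.
  change (ssum f (S (S n))) with (ssum f (S n) + f (S (S n))).
  assert (ssum f (S n) <= c * (INR (S n) - 1)) by (apply IHn; [intros; apply H; lia|lia]).
  assert (f (S (S n)) <= c) by (apply H; lia).
  rewrite (S_INR (S n)). lra.
Qed.

Lemma INR_pos_S n : (1 <= n)%nat -> 0 < INR n.
Proof. intros; apply lt_0_INR; lia. Qed.

Lemma INR_ge1 n : (1 <= n)%nat -> 1 <= INR n.
Proof. intros; apply (le_INR 1); lia. Qed.

Lemma w_pos k n : (1 <= n)%nat -> 0 < w k n.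
Proof. intros; unfold w; apply Rinv_0_lt_compat, pow_lt, INR_pos_S; auto. Qed.

Lemma w_1 k : w k 1 = 1.
Proof. unfold w; simpl; rewrite pow1; lra. Qed.

Lemma w_mono a b n : (b <= a)%nat -> (1 <= n)%nat -> w a n <= w b n.
Proof.
  intros Hab Hn; unfold w. apply Rinv_le_contravar. apply pow_lt, INR_pos_S; auto.
  apply Rle_pow; auto. apply INR_ge1; auto.
Qed.

Lemma w_S k n : (1 <= n)%nat -> w (S k) n * INR n = w k n.
Proof.
  intros Hn; unfold w. simpl. assert (0 < INR n) by (apply INR_pos_S; auto).
  assert (0 < INR n ^ k) by (apply pow_lt; auto).
  field. lra.
Qed.

Lemma zfin_cons_S k ks N : zfin (k :: ks) (S N) = zfin (k :: ks) N + / (INR (S N) ^ k) * zfin ks (S N).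
Proof. reflexivity. Qed.

Lemma zfin_zg p N : zfin p N = zg p (fun _ => 1) N.
Proof.
  revert N; induction p as [|k p IH]; intros N; [reflexivity|].
  induction N. reflexivity.
  rewrite zfin_cons_S. change (zg (k :: p) (fun _ => 1) (S N)) with (zg (k :: p) (fun _ => 1) N + w k (S N) * zg p (fun _ => 1) (S N)).
  rewrite IHN, IH. reflexivity.
Qed.

Lemma zg_app p q g N : zg (p ++ q) g N = zg p (zg q g) N.
Proof.
  revert N; induction p as [|k p IH]; intros N; simpl; auto.
  apply ssum_ext; intros; rewrite IH; auto.
Qed.

Lemma zg_ext p g h N : (forall n, (1 <= n <= N)%nat -> g n = h n) -> (1 <= N)%nat -> zg p g N = zg p h N.
Proof.
  revert N; induction p as [|k p IH]; intros N H HN; simpl; [apply H; lia|].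
  apply ssum_ext; intros n Hn. rewrite (IH n); auto. intros; apply H; lia. lia.
Qed.

Lemma zg_mono p g h N : (forall n, (1 <= n <= N)%nat -> g n <= h n) -> (1 <= N)%nat -> zg p g N <= zg p h N.
Proof.
  revert N; induction p as [|k p IH]; intros N H HN; simpl; [apply H; lia|].
  apply ssum_le; intros n Hn. apply Rmult_le_compat_l. left; apply w_pos; lia.
  apply IH; [intros; apply H; lia|lia].
Qed.

Lemma zg_lin p a g h N : zg p (fun n => a * g n + h n) N = a * zg p g N + zg p h N.
Proof.
  revert N; induction p as [|k p IH]; intros N; simpl; auto.
  rewrite <- ssum_lin. apply ssum_ext; intros. rewrite IH. ring.
Qed.

Lemma zg_zero p N : zg p (fun _ => 0) N = 0.
Proof.
  revert N; induction p as [|k p IH]; intros N; simpl; auto.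
  transitivity (ssum (fun _ => 0) N). apply ssum_ext; intros; rewrite IH; ring. rewrite ssum_const; ring.
Qed.

Lemma zg_scal p a g N : zg p (fun n => a * g n) N = a * zg p g N.
Proof.
  rewrite <- (Rplus_0_r (a * zg p g N)), <- (zg_zero p N), <- zg_lin.
  revert N; induction p as [|k p IH]; intros N; simpl; auto. ring.
  apply ssum_ext; intros. rewrite IH; auto.
Qed.

Lemma zg_nonneg p g N : (forall n, (1 <= n <= N)%nat -> 0 <= g n) -> (1 <= N)%nat -> 0 <= zg p g N.
Proof.
  intros H HN. rewrite <- (zg_zero p N). apply zg_mono; auto.
Qed.

Lemma zg_incr p g N : (forall n, (1 <= n)%nat -> 0 <= g n) -> p <> nil -> zg p g N <= zg p g (S N).
Proof.
  intros H Hp. destruct p as [|k p]; [congruence|]. simpl.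
  assert (0 <= w k (S N) * zg p g (S N)).
  apply Rmult_le_pos. left; apply w_pos; lia. apply zg_nonneg; [intros; apply H; lia|lia].
  lra.
Qed.

Lemma zg_pos p g N : (forall n, (1 <= n <= N)%nat -> 0 <= g n) -> 0 < g N -> (1 <= N)%nat -> 0 < zg p g N.
Proof.
  revert N; induction p as [|k p IH]; intros N H HgN HN; simpl; auto.
  destruct N; [lia|]. simpl.
  assert (0 <= ssum (fun n => w k n * zg p g n) N).
  apply ssum_nonneg; intros. apply Rmult_le_pos. left; apply w_pos; lia. apply zg_nonneg; [intros; apply H; lia| lia].
  assert (0 < w k (S N) * zg p g (S N)).
  apply Rmult_lt_0_compat. apply w_pos; lia. apply IH; auto.
  lra.
Qed.

Lemma zg1_1 p : zg p (fun _ => 1) 1 = 1.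
Proof. induction p as [|k p IH]; simpl; auto. rewrite IH, w_1. ring. Qed.

Lemma zfin_1 p : zfin p 1 = 1.
Proof. rewrite zfin_zg; apply zg1_1. Qed.

Lemma zfin_incr p N : zfin p N <= zfin p (S N).
Proof.
  rewrite !zfin_zg. destruct p as [|k p]. simpl; lra.
  apply zg_incr; [intros; lra| congruence].
Qed.

Lemma zfin_mono_N p N M : (N <= M)%nat -> zfin p N <= zfin p M.
Proof.
  induction 1. lra. eapply Rle_trans; [apply IHle|apply zfin_incr].
Qed.

Lemma zfin_ge1 p N : (1 <= N)%nat -> 1 <= zfin p N.
Proof. intros; rewrite <- (zfin_1 p). apply zfin_mono_N; auto. Qed.

Lemma zfin_nonneg p N : 0 <= zfin p N.
Proof. destruct N. destruct p; simpl; lra. pose proof (zfin_ge1 p (S N) ltac:(lia)); lra. Qed.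

Lemma zfin_app p q N : zfin (p ++ q) N = zg p (zfin q) N.
Proof.
  rewrite zfin_zg, zg_app. destruct N.
  destruct p; simpl; auto. symmetry; apply zfin_zg.
  apply zg_ext; [intros; rewrite zfin_zg; auto| lia].
Qed.

Lemma zfin_ext_mono q t N : zfin q N <= zfin (q ++ t) (S N).
Proof.
  eapply Rle_trans; [apply zfin_incr|].
  rewrite zfin_app, zfin_zg. apply zg_mono; [|lia].
  intros; apply zfin_ge1; lia.
Qed.

Lemma zg1_INR n : zg (1%nat :: nil) INR n = INR n.
Proof.
  simpl. transitivity (ssum (fun _ => 1) n).
  apply ssum_ext; intros m Hm. rewrite (w_S 0 m) by lia. unfold w; simpl. field.
  rewrite ssum_const; ring.
Qed.

Lemma zgS_INR b n : zg (S b :: nil) INR n = zfin (b :: nil) n.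
Proof.
  rewrite zfin_zg. simpl. apply ssum_ext; intros m Hm. rewrite (w_S b m) by lia. ring.
Qed.

Lemma zfin_cons k q n : zfin (k :: q) n = zg (k :: nil) (zfin q) n.
Proof. change (k :: q) with ((k :: nil) ++ q). apply zfin_app. Qed.

Definition allge1 (q : list nat) := forall k, In k q -> (1 <= k)%nat.

Lemma allge1_cons k q : allge1 (k :: q) -> (1 <= k)%nat /\ allge1 q.
Proof. intros H; split; [apply H; simpl; auto| intros x Hx; apply H; simpl; auto]. Qed.

Lemma allge1_app p q : allge1 p -> allge1 q -> allge1 (p ++ q).
Proof. intros Hp Hq x Hx. apply in_app_or in Hx. destruct Hx; auto. Qed.

Lemma zfin_le_n q n : allge1 q -> (1 <= n)%nat -> zfin q n <= INR n.
Proof.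
  revert n; induction q as [|k q IH]; intros n Hq Hn.
  simpl. apply INR_ge1; auto.
  destruct (allge1_cons _ _ Hq) as [Hk Hq'].
  rewrite zfin_cons. eapply Rle_trans. apply zg_mono; [|lia]. intros m Hm. apply IH; auto; lia.
  rewrite <- (zg1_INR n). simpl. apply ssum_le. intros m Hm.
  apply Rmult_le_compat_r. apply pos_INR. apply w_mono; lia.
Qed.

Lemma zfin1_mono a b n : (b <= a)%nat -> zfin (a :: nil) n <= zfin (b :: nil) n.
Proof.
  intros H. rewrite !zfin_zg. simpl. apply ssum_le. intros m Hm.
  apply Rmult_le_compat_r. lra. apply w_mono; lia.
Qed.

Lemma w_le_tail a m : (2 <= a)%nat -> (2 <= m)%nat -> w a m <= 4 * (/2)^a * (/ (INR m - 1) - / INR m).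
Proof.
  intros Ha Hm. replace a with (2 + (a - 2))%nat by lia. set (j := (a - 2)%nat).
  assert (HM : 2 <= INR m) by (apply (le_INR 2); lia).
  unfold w. rewrite pow_add.
  assert (0 < INR m ^ j) by (apply pow_lt; lra).
  assert (2 ^ j <= INR m ^ j) by (apply pow_incr; lra).
  assert (0 < 2 ^ j) by (apply pow_lt; lra).
  replace (4 * (/ 2) ^ (2 + j)) with (/ 2 ^ j) by (rewrite pow_add, !pow_inv; simpl; field; apply pow_nonzero; lra).
  assert (/ (INR m ^ 2 * INR m ^ j) <= / (INR m ^ 2 * 2^j)).
  { apply Rinv_le_contravar. apply Rmult_lt_0_compat; [apply pow_lt|]; lra. apply Rmult_le_compat_l; [|lra]. apply pow_le; lra. }
  assert (/ (INR m ^ 2 * 2^j) = / 2^j * / (INR m ^ 2)) by (field; lra).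
  assert (/ (INR m ^ 2) <= / (INR m - 1) - / INR m).
  { replace (/ (INR m - 1) - / INR m) with (/ (INR m * (INR m - 1))) by (field; lra).
    apply Rinv_le_contravar. apply Rmult_lt_0_compat; lra. simpl; nra. }
  assert (0 < / 2^j) by (apply Rinv_0_lt_compat; lra).
  nra.
Qed.

Lemma zfin_single_bound a n : (2 <= a)%nat -> zfin (a :: nil) n <= 1 + 4 * (/2)^a.
Proof.
  intros Ha. set (c := 4 * (/2)^a).
  assert (Hc : 0 < c) by (unfold c; apply Rmult_lt_0_compat; [lra|apply pow_lt; lra]).
  destruct n. simpl. lra.
  assert (H : forall n, (1 <= n)%nat -> zfin (a :: nil) n <= 1 + c * (1 - / INR n)).
  { intros n0 Hn0. induction n0; [lia|]. destruct n0.
    rewrite zfin_1. simpl. rewrite Rinv_1. lra.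
    rewrite zfin_cons_S. simpl zfin at 2.
    assert (IH := IHn0 ltac:(lia)).
    assert (Hw := w_le_tail a (S (S n0)) Ha ltac:(lia)).
    unfold w in Hw. replace (INR (S (S n0)) - 1) with (INR (S n0)) in Hw by (rewrite (S_INR (S n0)); ring).
    unfold c in *. lra. }
  specialize (H (S n) ltac:(lia)).
  assert (0 < / INR (S n)) by (apply Rinv_0_lt_compat, INR_pos_S; lia).
  assert (0 < c * / INR (S n)) by (apply Rmult_lt_0_compat; auto). lra.
Qed.

Definition dz q N := zg q (fun n => INR n - 1) N.

Lemma zg_INR_split q N : (1 <= N)%nat -> zg q INR N = zfin q N + dz q N.
Proof.
  intros HN. rewrite zfin_zg. unfold dz. rewrite <- (Rmult_1_l (zg q (fun _ => 1) N)).
  rewrite <- zg_lin. apply zg_ext; auto. intros; ring.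
Qed.

Lemma dz_nonneg q N : (1 <= N)%nat -> 0 <= dz q N.
Proof. intros; apply zg_nonneg; auto. intros n Hn. pose proof (INR_ge1 n ltac:(lia)); lra. Qed.

Lemma dz_shrink q b N : (1 <= b)%nat -> (1 <= N)%nat ->
  dz (q ++ b :: nil) N <= dz q N /\ ((2 <= b)%nat -> dz (q ++ b :: nil) N <= / 4 * dz q N).
Proof.
  intros Hb HN. unfold dz. rewrite zg_app. split.
  - apply zg_mono; auto. intros n Hn. simpl zg.
    rewrite <- (Rmult_1_l (INR n - 1)). apply ssum_lin_bound; try lia.
    intros m Hm. pose proof (INR_ge1 m ltac:(lia)).
    pose proof (w_mono b 1 m Hb ltac:(lia)). unfold w at 2 in H0. simpl in H0. rewrite Rmult_1_r in H0.
    assert (0 <= INR m - 1) by lra.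
    apply Rle_trans with (/ INR m * (INR m - 1)). apply Rmult_le_compat_r; auto.
    replace (/ INR m * (INR m - 1)) with (1 - / INR m) by (field; lra).
    assert (0 < / INR m) by (apply Rinv_0_lt_compat; lra). lra.
    simpl; rewrite w_1; lra.
  - intros Hb2. rewrite <- zg_scal. apply zg_mono; auto. intros n Hn. simpl zg.
    apply ssum_lin_bound; try lia.
    intros m Hm. assert (HM : 2 <= INR m) by (apply (le_INR 2); lia).
    pose proof (w_mono b 2 m Hb2 ltac:(lia)). unfold w at 2 in H. simpl in H. rewrite Rmult_1_r in H.
    assert (0 <= INR m - 1) by lra.
    apply Rle_trans with (/ (INR m * INR m) * (INR m - 1)). apply Rmult_le_compat_r; auto.
    replace (/ (INR m * INR m) * (INR m - 1)) with ((INR m - 1) / (INR m * INR m)) by (field; lra).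
    apply Rmult_le_reg_r with (INR m * INR m). nra.
    unfold Rdiv. rewrite Rmult_assoc, Rinv_l by nra. nra.
    simpl; rewrite w_1; lra.
Qed.

Lemma ssum_S f n : ssum f (S n) = ssum f n + f (S n).
Proof. reflexivity. Qed.

Lemma sqrt_step1 n : w 1 (S n) * sqrt (INR (S n)) <= 2 * (sqrt (INR (S n)) - sqrt (INR n)).
Proof.
  set (a := sqrt (INR n)). set (b := sqrt (INR (S n))).
  assert (Ha : 0 <= a) by apply sqrt_pos.
  assert (Hb2 : b * b = INR n + 1) by (unfold b; rewrite sqrt_sqrt; [rewrite S_INR; ring| apply pos_INR]).
  assert (Ha2 : a * a = INR n) by (unfold a; rewrite sqrt_sqrt; [ring| apply pos_INR]).
  assert (Hb : 0 < b) by (unfold b; apply sqrt_lt_R0; apply INR_pos_S; lia).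
  unfold w. rewrite pow_1. rewrite S_INR.
  rewrite <- Hb2. replace (/ (b * b) * b) with (/ b) by (field; lra).
  apply Rmult_le_reg_r with b; auto. rewrite Rinv_l by lra. nra.
Qed.

Lemma sqrt_sum1 n : ssum (fun m => w 1 m * sqrt (INR m)) n <= 2 * sqrt (INR n).
Proof.
  induction n. simpl. rewrite sqrt_0. lra.
  rewrite ssum_S. pose proof (sqrt_step1 n). lra.
Qed.

Lemma sqrt_step2 N : (1 <= N)%nat -> w 2 (S N) * sqrt (INR (S N)) <= 2 / sqrt (INR N) - 2 / sqrt (INR (S N)).
Proof.
  intros HN.
  set (a := sqrt (INR N)). set (b := sqrt (INR (S N))).
  assert (Ha : 0 < a) by (apply sqrt_lt_R0; apply INR_pos_S; lia).
  assert (Hb2 : b * b = INR N + 1) by (unfold b; rewrite sqrt_sqrt; [rewrite S_INR; ring| apply pos_INR]).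
  assert (Ha2 : a * a = INR N) by (unfold a; rewrite sqrt_sqrt; [ring| apply pos_INR]).
  assert (Hb : 0 < b) by (unfold b; apply sqrt_lt_R0; apply INR_pos_S; lia).
  assert (Hab : a < b) by nra.
  unfold w. replace (INR (S N) ^ 2) with ((INR N + 1) * (INR N + 1)) by (rewrite S_INR; ring).
  rewrite <- Hb2.
  replace (/ (b * b * (b * b)) * b) with (/ (b * b * b)) by (field; lra).
  replace (2 / a - 2 / b) with (2 * (b - a) / (a * b)) by (field; lra).
  assert (Hd : (b - a) * (a + b) = 1) by nra.
  apply Rmult_le_reg_r with (a * b * b * b * (a + b)). 
  repeat apply Rmult_lt_0_compat; lra.
  replace (/ (b * b * b) * (a * b * b * b * (a + b))) with (a * (a + b)) by (field; lra).
  replace (2 * (b - a) / (a * b) * (a * b * b * b * (a + b))) with (2 * b * b * ((b - a) * (a + b))) by (field; lra).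
  rewrite Hd. nra.
Qed.

Lemma sqrt_sum2 N : ssum (fun n => w 2 n * sqrt (INR n)) N <= 3.
Proof.
  assert (H : forall N, (1 <= N)%nat -> ssum (fun n => w 2 n * sqrt (INR n)) N <= 3 - 2 / sqrt (INR N)).
  { intros N0 HN0. induction N0; [lia|]. destruct N0.
    rewrite ssum_S. simpl ssum. rewrite w_1. change (INR 1) with 1. rewrite sqrt_1. lra.
    rewrite ssum_S. pose proof (sqrt_step2 (S N0) ltac:(lia)).
    assert (IH := IHN0 ltac:(lia)). lra. }
  destruct N. simpl; lra.
  specialize (H (S N) ltac:(lia)).
  assert (0 < 2 / sqrt (INR (S N))).
  { apply Rdiv_lt_0_compat. lra. apply sqrt_lt_R0, INR_pos_S; lia. }
  lra.
Qed.

Lemma zfin_sqrt q n : allge1 q -> (1 <= n)%nat -> zfin q n <= 2 ^ length q * sqrt (INR n).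
Proof.
  revert n; induction q as [|k q IH]; intros n Hq Hn.
  simpl. rewrite Rmult_1_l. rewrite <- sqrt_1. apply sqrt_le_1_alt. apply INR_ge1; auto.
  destruct (allge1_cons _ _ Hq) as [Hk Hq'].
  rewrite zfin_cons. eapply Rle_trans. apply zg_mono; [|lia]. intros m Hm. apply IH; auto; lia.
  simpl length. simpl zg.
  apply Rle_trans with (ssum (fun m => 2 ^ length q * (w 1 m * sqrt (INR m)) + 0) n).
  apply ssum_le. intros m Hm. 
  assert (0 < 2 ^ length q) by (apply pow_lt; lra).
  pose proof (sqrt_pos (INR m)). pose proof (w_mono k 1 m Hk ltac:(lia)).
  assert (0 <= 2 ^ length q * sqrt (INR m)) by (apply Rmult_le_pos; lra).
  replace (2 ^ length q * (w 1 m * sqrt (INR m)) + 0) with (w 1 m * (2 ^ length q * sqrt (INR m))) by ring.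
  apply Rmult_le_compat_r; auto.
  rewrite ssum_lin. rewrite ssum_const. pose proof (sqrt_sum1 n).
  assert (0 < 2 ^ length q) by (apply pow_lt; lra).
  simpl. nra.
Qed.

Lemma adm_bound k1 q : (2 <= k1)%nat -> allge1 q -> forall N, zfin (k1 :: q) N <= 3 * 2 ^ length q.
Proof.
  intros Hk Hq N. rewrite zfin_cons. simpl zg.
  apply Rle_trans with (ssum (fun m => 2 ^ length q * (w 2 m * sqrt (INR m)) + 0) N).
  apply ssum_le. intros m Hm.
  assert (0 < 2 ^ length q) by (apply pow_lt; lra).
  pose proof (sqrt_pos (INR m)). pose proof (w_mono k1 2 m Hk ltac:(lia)).
  pose proof (zfin_sqrt q m Hq ltac:(lia)). pose proof (w_pos k1 m ltac:(lia)).
  apply Rle_trans with (w k1 m * (2 ^ length q * sqrt (INR m))). apply Rmult_le_compat_l; lra.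
  assert (0 <= 2 ^ length q * sqrt (INR m)) by (apply Rmult_le_pos; lra).
  replace (2 ^ length q * (w 2 m * sqrt (INR m)) + 0) with (w 2 m * (2 ^ length q * sqrt (INR m))) by ring.
  apply Rmult_le_compat_r; auto.
  rewrite ssum_lin, ssum_const. pose proof (sqrt_sum2 N).
  assert (0 < 2 ^ length q) by (apply pow_lt; lra). nra.
Qed.

Lemma harmonic B : exists N, (1 <= N)%nat /\ B < zg (2%nat :: nil) INR N.
Proof.
  assert (H : forall N, INR N + 1 <= exp (zfin (1%nat :: nil) N)).
  { induction N. simpl. rewrite exp_0. lra.
    rewrite zfin_cons_S. simpl (zfin nil (S N)). rewrite exp_plus.
    pose proof (exp_ineq1_le (/ INR (S N) ^ 1 * 1)).
    assert (0 < INR (S N)) by (apply INR_pos_S; lia).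
    replace (/ INR (S N) ^ 1 * 1) with (/ INR (S N)) in * by (rewrite pow_1; ring).
    pose proof (exp_pos (zfin (1%nat :: nil) N)).
    pose proof (pos_INR N).
    apply Rle_trans with ((INR N + 1) * (1 + / INR (S N))).
    rewrite S_INR in *. right. field. lra.
    assert (0 < / INR (S N)) by (apply Rinv_0_lt_compat; lra). apply Rmult_le_compat; lra. }
  destruct (INR_archimed 1 (exp B)) as [n Hn]. lra.
  exists (S n). split. lia. rewrite zgS_INR.
  apply exp_lt_inv. eapply Rlt_le_trans; [|apply H]. rewrite S_INR. lra.
Qed.

Definition ones r := repeat 1%nat r.

Lemma allge1_ones r : allge1 (ones r).
Proof. intros x Hx. apply repeat_spec in Hx. lia. Qed.

Lemma ones_err N r n : (1 <= N)%nat -> (1 <= n <= N)%nat ->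
  INR n - zfin (ones r) n <= (INR n - 1) * (1 - / INR N) ^ r.
Proof.
  intros HN. set (th := 1 - / INR N).
  assert (HNr : 1 <= INR N) by (apply INR_ge1; auto).
  assert (Hth : 0 <= th) by (unfold th; assert (/ INR N <= 1) by (rewrite <- Rinv_1; apply Rinv_le_contravar; lra); lra).
  revert n; induction r; intros n Hn.
  simpl. lra.
  change (ones (S r)) with (1%nat :: ones r). rewrite zfin_cons.
  rewrite <- (zg1_INR n) at 1.
  replace (zg (1%nat :: nil) INR n - zg (1%nat :: nil) (zfin (ones r)) n)
    with (zg (1%nat :: nil) (fun m => (-1) * zfin (ones r) m + INR m) n) by (rewrite zg_lin; ring).
  simpl zg. rewrite Rmult_comm.
  apply ssum_lin_bound; try lia.
  - intros m Hm. specialize (IHr m ltac:(lia)).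
    assert (HM : 2 <= INR m) by (apply (le_INR 2); lia).
    assert (HmN : INR m <= INR N) by (apply le_INR; lia).
    assert (0 < w 1 m) by (apply w_pos; lia).
    apply Rle_trans with (w 1 m * ((INR m - 1) * th ^ r)).
    apply Rmult_le_compat_l; lra.
    replace (w 1 m * ((INR m - 1) * th ^ r)) with ((1 - / INR m) * th ^ r) by (unfold w; simpl; field; lra).
    replace (th ^ S r) with (th * th ^ r) by reflexivity. apply Rmult_le_compat_r. apply pow_le; auto.
    unfold th. assert (/ INR N <= / INR m) by (apply Rinv_le_contravar; lra). lra.
  - rewrite w_1, zfin_1. simpl. lra.
Qed.

Lemma ones_approx p N y : (1 <= N)%nat -> y < zg p INR N -> exists r, y < zfin (p ++ ones r) N.
Proof.
  intros HN Hy. set (th := 1 - / INR N).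
  assert (HNr : 1 <= INR N) by (apply INR_ge1; auto).
  assert (Hth : 0 <= th) by (unfold th; assert (/ INR N <= 1) by (rewrite <- Rinv_1; apply Rinv_le_contravar; lra); lra).
  assert (Hth1 : th < 1) by (unfold th; assert (0 < / INR N) by (apply Rinv_0_lt_compat; lra); lra).
  pose proof (dz_nonneg p N HN) as Hd.
  destruct (pow_lt_1_zero th ltac:(rewrite Rabs_pos_eq; lra) ((zg p INR N - y) / (dz p N + 1))) as [r Hr].
  apply Rdiv_lt_0_compat; lra.
  exists r. specialize (Hr r (le_n r)). rewrite Rabs_pos_eq in Hr by (apply pow_le; auto).
  rewrite zfin_app.
  assert (zg p (fun n => (- th ^ r) * (INR n - 1) + INR n) N <= zg p (zfin (ones r)) N).
  { apply zg_mono; auto. intros n Hn. pose proof (ones_err N r n HN Hn). fold th in H. lra. }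
  rewrite zg_lin in H. fold (dz p N) in H.
  assert (th ^ r * (dz p N + 1) < zg p INR N - y).
  { apply Rmult_lt_reg_r with (/ (dz p N + 1)). apply Rinv_0_lt_compat; lra.
    rewrite Rmult_assoc, Rinv_r by lra. lra. }
  assert (0 <= th ^ r) by (apply pow_le; auto).
  nra.
Qed.

Lemma least_ex (P : nat -> Prop) : (exists n, P n) -> exists n, P n /\ forall m, (m < n)%nat -> ~ P m.
Proof.
  intros [n Hn].
  assert (H : forall n m, (m <= n)%nat -> P m -> exists n, P n /\ forall m, (m < n)%nat -> ~ P m).
  { induction n0; intros m Hm Pm;
    (destruct (classic (exists m', (m' < m)%nat /\ P m')) as [[m' [H1 H2]]|H];
     [| exists m; split; auto; intros m' Hm' Pm'; apply H; exists m'; auto]).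
    lia. apply (IHn0 m'); auto; lia. }
  apply (H n n); auto.
Qed.

Lemma lub2 (u : nat -> nat -> R) B : (forall r N, u r N <= B) ->
  exists L, (forall r N, u r N <= L) /\ (forall y, y < L -> exists r N, y < u r N).
Proof.
  intros HB. set (E := fun x => exists r N, x = u r N).
  assert (Hb : bound E) by (exists B; intros x [r [N ->]]; auto).
  assert (Hne : exists x, E x) by (exists (u 0%nat 0%nat); exists 0%nat, 0%nat; auto).
  destruct (completeness E Hb Hne) as [L [HL1 HL2]].
  exists L; split.
  - intros r N; apply HL1; exists r, N; auto.
  - intros y Hy. apply NNPP; intros Hn.
    assert (L <= y). apply HL2. intros x [r [N ->]].
    apply Rnot_lt_le; intros Hlt; apply Hn; exists r, N; auto.
    lra.
Qed.

Lemma sup_lim u L : (forall n, u n <= u (S n)) -> (forall n, u n <= L) ->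
  (forall y, y < L -> exists n, y < u n) -> is_lim_seq u L.
Proof.
  intros Hi Hb Hs. apply is_lim_seq_spec. intros eps.
  destruct (Hs (L - eps)) as [n0 Hn0]. destruct eps; simpl; lra.
  exists n0. intros n Hn.
  assert (u n0 <= u n). { induction Hn. lra. specialize (Hi m); lra. }
  specialize (Hb n). rewrite Rabs_left1 by lra. lra.
Qed.

Lemma zs_bound p B : (forall N, zfin p N <= B) ->
  (forall N, zfin p N <= zeta_star p) /\ zeta_star p <= B /\
  (forall y, y < zeta_star p -> exists N, y < zfin p N).
Proof.
  intros HB. destruct (lub2 (fun _ N => zfin p N) B (fun _ N => HB N)) as [L [H1 H2]].
  assert (Hl : is_lim_seq (zfin p) L).
  { apply sup_lim. apply zfin_incr. intros; apply (H1 0%nat). intros y Hy; destruct (H2 y Hy) as [_ [N HN]]; eauto. }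
  assert (HZ : zeta_star p = L) by (unfold zeta_star; rewrite (is_lim_seq_unique _ _ Hl); auto).
  rewrite HZ. split; [intros; apply (H1 0%nat)|split].
  apply Rnot_lt_le; intros Hlt. destruct (H2 B Hlt) as [_ [N HN]]. specialize (HB N); lra.
  intros y Hy; destruct (H2 y Hy) as [_ [N HN]]; eauto.
Qed.

Lemma prefix_S k r : prefix k (S r) = prefix k r ++ k r :: nil.
Proof. unfold prefix. rewrite seq_S, map_app. reflexivity. Qed.

Lemma prefix_add k a b : prefix k (a + b) = prefix k a ++ map k (seq a b).
Proof. unfold prefix. rewrite seq_app, map_app. reflexivity. Qed.

Lemma prefix_cons k r : prefix k (S r) = k 0%nat :: map k (seq 1 r).
Proof. reflexivity. Qed.

Lemma allge1_map k a b : (forall i, (1 <= k i)%nat) -> allge1 (map k (seq a b)).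
Proof. intros H x Hx. apply in_map_iff in Hx. destruct Hx as [i [<- _]]. auto. Qed.

Lemma prefix_ext k m r : (forall i, (i < r)%nat -> k i = m i) -> prefix k r = prefix m r.
Proof. intros H. unfold prefix. apply map_ext_in. intros i Hi. apply in_seq in Hi. apply H; lia. Qed.

Definition eta_sup k L := (forall r N, zfin (prefix k r) N <= L) /\
  (forall y, y < L -> exists r N, y < zfin (prefix k r) N).

Lemma eta_char k L : eta_sup k L ->
  is_lim_seq (fun r => zeta_star (prefix k r)) L /\ eta k = L.
Proof.
  intros [H1 H2].
  assert (HZ : forall r, (forall N, zfin (prefix k r) N <= zeta_star (prefix k r)) /\ zeta_star (prefix k r) <= L /\
     (forall y, y < zeta_star (prefix k r) -> exists N, y < zfin (prefix k r) N)).
  { intros r; apply zs_bound; auto. }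
  assert (Hl : is_lim_seq (fun r => zeta_star (prefix k r)) L).
  { apply sup_lim.
    - intros r. apply Rnot_lt_le; intros Hlt. destruct (HZ r) as [_ [_ H3]].
      destruct (H3 _ Hlt) as [N HN].
      pose proof (zfin_ext_mono (prefix k r) (k r :: nil) N). rewrite <- prefix_S in H.
      destruct (HZ (S r)) as [H4 _]. specialize (H4 (S N)). lra.
    - intros r; apply HZ.
    - intros y Hy. destruct (H2 y Hy) as [r [N HN]]. exists r. destruct (HZ r) as [H4 _]. specialize (H4 N); lra. }
  split; auto. unfold eta. rewrite (is_lim_seq_unique _ _ Hl). auto.
Qed.

Lemma bound_all l B : (forall N, (1 <= N)%nat -> zfin l N <= B) -> forall N, zfin l N <= B.
Proof. intros H N. eapply Rle_trans. apply zfin_incr. apply H; lia. Qed.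

Lemma tail_bound q t N : allge1 t -> (1 <= N)%nat -> zfin (q ++ t) N <= zg q INR N.
Proof. intros Ht HN. rewrite zfin_app. apply zg_mono; auto. intros; apply zfin_le_n; auto; lia. Qed.

Lemma zg_INR_last q b N : (1 <= N)%nat -> zg (q ++ S b :: nil) INR N = zfin (q ++ b :: nil) N.
Proof.
  intros HN. rewrite zg_app, zfin_app. apply zg_ext; auto. intros; apply zgS_INR.
Qed.

Lemma adm_bound2 l : (exists k1 q, l = k1 :: q /\ (2 <= k1)%nat /\ allge1 q) -> exists B, 0 < B /\ forall N, zfin l N <= B.
Proof.
  intros [k1 [q [-> [H1 H2]]]]. exists (3 * 2 ^ length q). split.
  apply Rmult_lt_0_compat; [lra| apply pow_lt; lra]. apply adm_bound; auto.
Qed.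

Lemma inT_s k : inT k -> exists s, (2 <= k s)%nat /\ (s = 0%nat /\ (3 <= k 0%nat)%nat \/ (1 <= s)%nat).
Proof.
  intros [H0 [H1 H2]]. destruct (Nat.eq_dec (k 0%nat) 2).
  destruct (H2 e) as [s [Hs1 Hs2]]. exists s; split; auto.
  exists 0%nat. split. lia. left; split; auto; lia.
Qed.

Lemma adm_prefix_last k s : (forall i, (1 <= k i)%nat) -> (2 <= k 0%nat)%nat -> (2 <= k s)%nat ->
  (s = 0%nat /\ (3 <= k 0%nat)%nat \/ (1 <= s)%nat) ->
  exists k1 q, prefix k s ++ (k s - 1)%nat :: nil = k1 :: q /\ (2 <= k1)%nat /\ allge1 q.
Proof.
  intros Hall H0 Hs [[-> H3]|H].
  - exists (k 0%nat - 1)%nat, nil. split; auto. split. lia. intros x [].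
  - destruct s; [lia|]. rewrite prefix_cons. exists (k 0%nat), (map k (seq 1 s) ++ (k (S s) - 1)%nat :: nil).
    split; auto. split; auto. apply allge1_app. apply allge1_map; auto.
    intros x [<-|[]]. lia.
Qed.

Lemma T_bound k : inT k -> exists B, forall r N, zfin (prefix k r) N <= B.
Proof.
  intros HT. pose proof HT as [H0 [H1 H2]].
  destruct (inT_s k HT) as [s [Hs Hcase]].
  destruct (adm_bound2 _ (adm_prefix_last k s H1 H0 Hs Hcase)) as [B [HB0 HB]].
  assert (Hbig : forall t N, zfin (prefix k (S s) ++ map k (seq (S s) t)) N <= B).
  { intros t. apply bound_all. intros N HN.
    eapply Rle_trans. apply tail_bound; auto. apply allge1_map; auto.
    rewrite prefix_S. replace (k s) with (S (k s - 1)) by lia. rewrite zg_INR_last; auto. }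
  exists B. intros r N.
  destruct (Compare_dec.le_lt_dec (S s) r).
  - replace r with (S s + (r - S s))%nat by lia. rewrite prefix_add. apply Hbig.
  - eapply Rle_trans. apply (zfin_ext_mono _ (map k (seq r (S s - r))) N).
    rewrite <- prefix_add. replace (r + (S s - r))%nat with (S s) by lia.
    specialize (Hbig 0%nat (S N)). simpl in Hbig. rewrite app_nil_r in Hbig. auto.
Qed.

Lemma inT_sup k : inT k -> eta_sup k (eta k).
Proof.
  intros HT. destruct (T_bound k HT) as [B HB].
  destruct (lub2 (fun r N => zfin (prefix k r) N) B HB) as [L HL].
  destruct (eta_char k L HL) as [_ He]. rewrite He. exact HL.
Qed.

Lemma part_i k : inT k -> exists l : R, is_lim_seq (fun r => zeta_star (prefix k r)) l /\ 1 < l.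
Proof.
  intros HT. pose proof (inT_sup k HT) as HS. destruct (eta_char k _ HS) as [Hl _].
  exists (eta k). split; auto.
  destruct HS as [H1 _]. specialize (H1 1%nat 2%nat).
  unfold prefix in H1. simpl map in H1. rewrite zfin_cons_S, zfin_1 in H1.
  pose proof (w_pos (k 0%nat) 2 ltac:(lia)). change (/ INR 2 ^ k 0%nat) with (w (k 0%nat) 2) in H1. change (zfin nil 2) with 1 in H1. simpl. lra.
Qed.

Lemma zg_mono_N q g N M : (forall n, (1 <= n)%nat -> 0 <= g n) -> q <> nil -> (N <= M)%nat -> zg q g N <= zg q g M.
Proof.
  intros Hg Hq. induction 1. lra. eapply Rle_trans; [apply IHle|apply zg_incr; auto].
Qed.

Lemma zg_ext_all p g h N : (forall n, g n = h n) -> zg p g N = zg p h N.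
Proof.
  intros H. revert N; induction p as [|k p IH]; intros N; simpl; auto.
  apply ssum_ext; intros; rewrite IH; auto.
Qed.

Lemma gap q b : q <> nil -> exists d, 0 < d /\ forall N, zfin q N + d <= zfin (q ++ b :: nil) (S (S N)).
Proof.
  intros Hq. set (g := fun n => zfin (b :: nil) n - 1).
  assert (Hg : forall n, (1 <= n)%nat -> 0 <= g n) by (intros; unfold g; pose proof (zfin_ge1 (b :: nil) n H); lra).
  assert (Hsplit : forall M, zfin (q ++ b :: nil) M = zg q g M + zfin q M).
  { intros M. rewrite zfin_app, zfin_zg. rewrite <- (Rmult_1_l (zg q g M)), <- zg_lin.
    apply zg_ext_all. intros; unfold g; ring. }
  exists (zg q g 2). split.
  - apply zg_pos; auto. intros; apply Hg; lia.
    unfold g. rewrite zfin_cons_S, zfin_1. change (zfin nil 2) with 1. pose proof (w_pos b 2 ltac:(lia)).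
    change (/ INR 2 ^ b) with (w b 2). lra.
  - intros N. rewrite Hsplit. pose proof (zg_mono_N q g 2 (S (S N)) Hg Hq ltac:(lia)).
    pose proof (zfin_mono_N q N (S (S N)) ltac:(lia)). lra.
Qed.

Lemma order_fwd k m : inT k -> inT m -> succ_lex k m -> eta m < eta k.
Proof.
  intros Hk Hm [j [Hj Hlt]].
  pose proof (inT_sup k Hk) as [Sk1 Sk2]. pose proof (inT_sup m Hm) as [Sm1 Sm2].
  destruct Hm as [_ [Hm1 _]].
  set (p := prefix k j). assert (Hp : prefix m j = p) by (symmetry; apply prefix_ext; auto).
  set (q := prefix k (S j)). assert (Hq : q = p ++ k j :: nil) by apply prefix_S.
  destruct (gap q (k (S j))) as [d [Hd Hgap]]. rewrite Hq; destruct p; discriminate.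
  assert (Hqq : q ++ k (S j) :: nil = prefix k (S (S j))) by (symmetry; apply prefix_S).
  rewrite Hqq in Hgap.
  assert (Hmain : forall r N, (1 <= N)%nat -> zfin (prefix m r) N <= zfin q (S N)).
  { intros r N HN. destruct (Compare_dec.le_lt_dec r j).
    - eapply Rle_trans. apply (zfin_ext_mono _ (map m (seq r (j - r))) N).
      rewrite <- prefix_add. replace (r + (j - r))%nat with j by lia. rewrite Hp.
      rewrite Hq. rewrite zfin_app, zfin_zg.
      apply zg_mono; [|lia]. intros; apply zfin_ge1; lia.
    - replace r with (S j + (r - S j))%nat by lia. rewrite prefix_add, prefix_S, Hp.
      eapply Rle_trans. apply tail_bound; auto. apply allge1_map; auto.
      replace (m j) with (S (m j - 1)) by lia. rewrite zg_INR_last by auto.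
      eapply Rle_trans; [|apply zfin_incr]. rewrite Hq, !zfin_app. apply zg_mono; auto.
      intros; apply zfin1_mono; lia. }
  assert (Hall : forall r N, zfin (prefix m r) N <= eta k - d).
  { intros r N. eapply Rle_trans. apply zfin_incr. eapply Rle_trans. apply Hmain; lia.
    specialize (Hgap (S (S N))). specialize (Sk1 (S (S j)) (S (S (S (S N))))). lra. }
  assert (eta m <= eta k - d).
  { apply Rnot_lt_le. intros Hc. destruct (Sm2 _ Hc) as [r [N HN]]. specialize (Hall r N). lra. }
  lra.
Qed.

Lemma eta_ext k m : (forall i, k i = m i) -> eta k = eta m.
Proof.
  intros H. unfold eta. f_equal. apply Lim_seq_ext. intros r. f_equal. apply prefix_ext; auto.
Qed.

Lemma first_diff (k m : nat -> nat) : ~ (forall i, k i = m i) -> exists j, (forall i, (i < j)%nat -> k i = m i) /\ k j <> m j.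
Proof.
  intros H. apply not_all_ex_not in H.
  destruct (least_ex (fun i => k i <> m i) H) as [j [Hj1 Hj2]].
  exists j. split; auto. intros i Hi. apply NNPP. apply Hj2; auto.
Qed.

Lemma eta_inj k m : inT k -> inT m -> eta k = eta m -> forall i, k i = m i.
Proof.
  intros Hk Hm He. apply NNPP. intros Hn. destruct (first_diff k m Hn) as [j [Hj1 Hj2]].
  destruct (Compare_dec.lt_eq_lt_dec (k j) (m j)) as [[Hl|Hl]|Hl]; [|congruence|].
  - pose proof (order_fwd k m Hk Hm (ex_intro _ j (conj Hj1 Hl))). lra.
  - assert (Hj1' : forall i, (i < j)%nat -> m i = k i) by (intros; symmetry; auto).
    pose proof (order_fwd m k Hm Hk (ex_intro _ j (conj Hj1' Hl))). lra.
Qed.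

Lemma order_iff k m : inT k -> inT m -> (succ_lex k m <-> eta m < eta k).
Proof.
  intros Hk Hm. split. apply order_fwd; auto.
  intros Hlt. destruct (classic (forall i, k i = m i)) as [Heq|Hn].
  rewrite (eta_ext k m Heq) in Hlt. lra.
  destruct (first_diff k m Hn) as [j [Hj1 Hj2]].
  destruct (Compare_dec.lt_eq_lt_dec (k j) (m j)) as [[Hl|Hl]|Hl]; [|congruence|].
  - exists j; auto.
  - assert (Hj1' : forall i, (i < j)%nat -> m i = k i) by (intros; symmetry; auto).
    pose proof (order_fwd m k Hm Hk (ex_intro _ j (conj Hj1' Hl))). lra.
Qed.

Definition Inv (x : R) (p : list nat) : Prop :=
  (exists y, y < x /\ forall N, zfin p N <= y) /\
  (forall y, y < x -> exists N, (1 <= N)%nat /\ y < zg p INR N).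

Lemma small_pow (e : R) : 0 < e -> exists a, (2 <= a)%nat /\ 4 * (/2)^a < e.
Proof.
  intros He. destruct (pow_lt_1_zero (/2) ltac:(rewrite Rabs_pos_eq; lra) (e / 4) ltac:(lra)) as [N HN].
  exists (Nat.max N 2). split. lia. specialize (HN (Nat.max N 2) ltac:(lia)).
  rewrite Rabs_pos_eq in HN by (apply pow_le; lra). lra.
Qed.

Lemma not_bounded_big x l : ~ (exists y, y < x /\ forall N, zfin l N <= y) ->
  forall y, y < x -> exists N, (1 <= N)%nat /\ y < zfin l N.
Proof.
  intros H y Hy. apply NNPP. intros Hn. apply H. exists y. split; auto.
  apply bound_all. intros N HN. apply Rnot_lt_le. intros Hlt. apply Hn. exists N; auto.
Qed.

Lemma start_step x : 1 < x -> exists a, (2 <= a)%nat /\ Inv x (a :: nil).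
Proof.
  intros Hx.
  set (S0 := fun a => (2 <= a)%nat /\ exists y, y < x /\ forall N, zfin (a :: nil) N <= y).
  assert (Hex : exists a, S0 a).
  { destruct (small_pow (x - 1)) as [a [Ha1 Ha2]]. lra.
    exists a. split; auto. exists (1 + 4 * (/2)^a). split. lra.
    intros N; apply zfin_single_bound; auto. }
  destruct (least_ex S0 Hex) as [a [[Ha Hb] Hmin]].
  exists a. split; auto. split; auto.
  destruct (Nat.eq_dec a 2) as [->|Hne].
  - intros y Hy. apply harmonic.
  - assert (HnS : ~ S0 (a - 1)%nat) by (apply Hmin; lia).
    assert (Hnb : ~ (exists y, y < x /\ forall N, zfin ((a - 1)%nat :: nil) N <= y)).
    { intros Hc; apply HnS; split; auto; lia. }
    intros y Hy. destruct (not_bounded_big x _ Hnb y Hy) as [N [HN1 HN2]].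
    exists N; split; auto. replace a with (S (a - 1)) by lia. rewrite zgS_INR. auto.
Qed.

Lemma next_step x p : 1 < x -> p <> nil -> Inv x p -> exists a, (1 <= a)%nat /\ Inv x (p ++ a :: nil).
Proof.
  intros Hx Hp [[y0 [Hy0 Hb0]] Hh].
  set (S0 := fun a => (1 <= a)%nat /\ exists y, y < x /\ forall N, zfin (p ++ a :: nil) N <= y).
  assert (Hy1 : 1 <= y0) by (rewrite <- (zfin_1 p); auto).
  assert (Hex : exists a, S0 a).
  { destruct (small_pow ((x - y0) / y0)) as [a [Ha1 Ha2]].
    apply Rdiv_lt_0_compat; lra.
    exists a. split. lia. exists ((1 + 4 * (/2)^a) * y0). split.
    assert (4 * (/2)^a * y0 < x - y0).
    { replace (x - y0) with ((x - y0) / y0 * y0) by (field; lra). apply Rmult_lt_compat_r; lra. }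
    lra.
    apply bound_all. intros N HN. rewrite zfin_app.
    eapply Rle_trans. apply (zg_mono p _ (fun n => (1 + 4 * (/ 2) ^ a) * 1)); auto.
    intros; rewrite Rmult_1_r; apply zfin_single_bound; auto.
    rewrite zg_scal, <- zfin_zg. apply Rmult_le_compat_l; auto.
    assert (0 < (/2)^a) by (apply pow_lt; lra). lra. }
  destruct (least_ex S0 Hex) as [a [[Ha Hb] Hmin]].
  exists a. split; auto. split; auto.
  destruct (Nat.eq_dec a 1) as [->|Hne].
  - intros y Hy. destruct (Hh y Hy) as [N [HN1 HN2]]. exists N. split; auto.
    rewrite zg_app. rewrite (zg_ext p _ INR N); auto. intros; apply zg1_INR.
  - assert (HnS : ~ S0 (a - 1)%nat) by (apply Hmin; lia).
    assert (Hnb : ~ (exists y, y < x /\ forall N, zfin (p ++ (a - 1)%nat :: nil) N <= y)).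
    { intros Hc; apply HnS; split; auto; lia. }
    intros y Hy. destruct (not_bounded_big x _ Hnb y Hy) as [N [HN1 HN2]].
    exists N; split; auto. replace a with (S (a - 1)) by lia. rewrite zg_INR_last; auto.
Qed.

Section Construction.
Variable x : R.

Definition a0 : nat := epsilon (inhabits 0%nat) (fun a => (2 <= a)%nat /\ Inv x (a :: nil)).
Definition fstep (p : list nat) : nat := epsilon (inhabits 0%nat) (fun a => (1 <= a)%nat /\ Inv x (p ++ a :: nil)).
Definition gch (p : list nat) : nat := match p with nil => a0 | _ => fstep p end.
Fixpoint Lst (r : nat) : list nat := match r with O => nil | S r' => Lst r' ++ gch (Lst r') :: nil end.
Definition kk (i : nat) : nat := nth i (Lst (S i)) 0%nat.

Lemma Lst_len r : length (Lst r) = r.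
Proof. induction r; simpl; auto. rewrite length_app, IHr. simpl. lia. Qed.

Lemma Lst_prefix r : prefix kk r = Lst r.
Proof.
  induction r; auto. rewrite prefix_S, IHr. simpl. f_equal. f_equal.
  unfold kk. simpl. rewrite app_nth2; rewrite Lst_len; auto. rewrite Nat.sub_diag. reflexivity.
Qed.

Lemma Lst_S_nonnil r : Lst (S r) <> nil.
Proof. simpl. destruct (Lst r); discriminate. Qed.

Hypothesis Hx : 1 < x.

Lemma Lst_inv r : Inv x (Lst (S r)) /\ (r = 0%nat -> (2 <= gch (Lst r))%nat) /\ (1 <= gch (Lst r))%nat.
Proof.
  induction r.
  - simpl. destruct (epsilon_spec (inhabits 0%nat) (fun a => (2 <= a)%nat /\ Inv x (a :: nil)) (start_step x Hx)) as [H1 H2].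
    fold a0 in H1, H2. split; auto. split; auto. lia.
  - destruct IHr as [IH _].
    assert (Hg : gch (Lst (S r)) = fstep (Lst (S r))).
    { pose proof (Lst_S_nonnil r). destruct (Lst (S r)); [congruence|reflexivity]. }
    destruct (epsilon_spec (inhabits 0%nat) (fun a => (1 <= a)%nat /\ Inv x (Lst (S r) ++ a :: nil)) (next_step x _ Hx (Lst_S_nonnil r) IH)) as [H1 H2].
    fold (fstep (Lst (S r))) in H1, H2. rewrite <- Hg in H1, H2.
    split; [exact H2|]. split; [lia|auto].
Qed.

Lemma kk_ge1 i : (1 <= kk i)%nat.
Proof.
  unfold kk. simpl. rewrite app_nth2; rewrite Lst_len; auto. rewrite Nat.sub_diag. apply (Lst_inv i).
Qed.

Lemma kk_0 : (2 <= kk 0)%nat.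
Proof. unfold kk. simpl. apply (Lst_inv 0); auto. Qed.

Lemma kk_inv r : Inv x (prefix kk (S r)).
Proof. rewrite Lst_prefix. apply Lst_inv. Qed.

Lemma map_ones k a t : (forall i, (a <= i)%nat -> k i = 1%nat) -> map k (seq a t) = ones t.
Proof.
  revert a; induction t; intros a H; simpl; auto. rewrite H by lia. change (ones (S t)) with (1%nat :: ones t). f_equal. apply IHt. intros; apply H; lia.
Qed.

Lemma kk_inT : inT kk.
Proof.
  split. apply kk_0. split. apply kk_ge1.
  intros H2. apply NNPP. intros Hn.
  assert (Hall : forall i, (1 <= i)%nat -> kk i = 1%nat).
  { intros i Hi. pose proof (kk_ge1 i). destruct (Nat.eq_dec (kk i) 1); auto. exfalso. apply Hn. exists i. split; auto; lia. }
  destruct (harmonic x) as [N [HN1 HN2]].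
  destruct (ones_approx (2%nat :: nil) N x HN1 HN2) as [t Ht].
  destruct (kk_inv t) as [[y [Hy Hb]] _].
  rewrite prefix_cons, H2, (map_ones kk 1 t Hall) in Hb. specialize (Hb N). change ((2%nat :: nil) ++ ones t) with (2%nat :: ones t) in Ht. lra.
Qed.

Lemma kk_sup : eta_sup kk x.
Proof.
  split.
  - intros r N. destruct r. simpl. lra. destruct (kk_inv r) as [[y [Hy Hb]] _]. specialize (Hb N). lra.
  - intros y Hy.
    destruct (classic (exists r0, forall s, (r0 <= s)%nat -> kk s = 1%nat)) as [[r0 Hr0]|Hinf].
    + destruct (kk_inv r0) as [_ Hh]. destruct (Hh y Hy) as [N [HN1 HN2]].
      destruct (ones_approx _ N y HN1 HN2) as [t Ht].
      exists (S r0 + t)%nat, N. rewrite prefix_add, (map_ones kk (S r0) t); auto.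
      intros; apply Hr0; lia.
    + assert (Hinf' : forall r0, exists s, (r0 <= s)%nat /\ (2 <= kk s)%nat).
      { intros r0. apply NNPP. intros Hc. apply Hinf. exists r0. intros s Hs.
        pose proof (kk_ge1 s). destruct (Nat.eq_dec (kk s) 1); auto. exfalso. apply Hc. exists s. split; auto. lia. }
      destruct (Hinf' 1%nat) as [s [Hs1 Hs2]].
      destruct (adm_bound2 _ (adm_prefix_last kk s kk_ge1 kk_0 Hs2 (or_intror Hs1))) as [B [HB0 HB]].
      assert (Hdec : forall r r' N, (1 <= N)%nat -> (r <= r')%nat -> dz (prefix kk r') N <= dz (prefix kk r) N).
      { intros r r' N HN. induction 1. lra. rewrite prefix_S. eapply Rle_trans; [|apply IHle].
        apply dz_shrink; auto. apply kk_ge1. }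
      assert (Hj : forall j, exists r, forall N, (1 <= N)%nat -> dz (prefix kk r) N <= B * (/4) ^ j).
      { induction j.
        - exists (S s). intros N HN. simpl. rewrite Rmult_1_r.
          pose proof (zg_INR_split (prefix kk (S s)) N HN).
          pose proof (zfin_nonneg (prefix kk (S s)) N).
          assert (E : zg (prefix kk (S s)) INR N = zfin (prefix kk s ++ (kk s - 1)%nat :: nil) N).
          { rewrite prefix_S. pose proof (zg_INR_last (prefix kk s) (kk s - 1) N HN) as E.
            replace (S (kk s - 1)) with (kk s) in E by lia. exact E. }
          specialize (HB N). lra.
        - destruct IHj as [r Hr]. destruct (Hinf' r) as [s' [Hs'1 Hs'2]].
          exists (S s'). intros N HN. rewrite prefix_S.
          destruct (dz_shrink (prefix kk s') (kk s') N (kk_ge1 s') HN) as [_ H4].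
          specialize (H4 Hs'2). specialize (Hdec r s' N HN Hs'1). specialize (Hr N HN).
          simpl. lra. }
      destruct (pow_lt_1_zero (/4) ltac:(rewrite Rabs_pos_eq; lra) ((x - y) / 2 / B)) as [j Hjj].
      apply Rdiv_lt_0_compat; lra.
      specialize (Hjj j (le_n j)). rewrite Rabs_pos_eq in Hjj by (apply pow_le; lra).
      destruct (Hj j) as [r Hr].
      destruct (kk_inv r) as [_ Hh]. destruct (Hh ((x + y) / 2) ltac:(lra)) as [N [HN1 HN2]].
      exists (S r), N.
      rewrite zg_INR_split in HN2 by auto.
      assert (dz (prefix kk (S r)) N <= dz (prefix kk r) N) by (apply Hdec; auto).
      specialize (Hr N HN1).
      assert (B * (/4)^j < (x - y) / 2).
      { apply Rmult_lt_compat_l with (r := B) in Hjj; auto. unfold Rdiv in Hjj.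
        replace (B * ((x - y) * / 2 * / B)) with ((x - y) / 2) in Hjj by (field; lra). lra. }
      lra.
Qed.

End Construction.

Lemma surj x : 1 < x -> exists k, inT k /\ eta k = x.
Proof.
  intros Hx. exists (kk x). split. apply kk_inT; auto.
  apply (eta_char (kk x) x (kk_sup x Hx)).
Qed.

Lemma Zstar_ge1 y : Zstar y -> 1 <= y.
Proof.
  intros [ks [Hadm ->]]. destruct ks as [|k1 q]; [destruct Hadm|].
  destruct Hadm as [H1 H2].
  assert (Hq : allge1 q) by (intros z Hz; apply H2; simpl; auto).
  destruct (zs_bound _ _ (adm_bound k1 q H1 Hq)) as [Hz _].
  rewrite <- (zfin_1 (k1 :: q)). apply Hz.
Qed.

Lemma approx x : 1 <= x -> forall eps, 0 < eps -> exists y, Zstar y /\ y <> x /\ Rabs (y - x) < eps.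
Proof.
  intros Hx eps He. destruct (Rle_lt_or_eq_dec 1 x Hx) as [Hlt|Heq].
  - destruct (surj x Hlt) as [k [Hk Hek]].
    destruct (inT_sup k Hk) as [S1 S2]. rewrite Hek in S1, S2.
    destruct (S2 (x - eps) ltac:(lra)) as [r [N HN]].
    set (q := prefix k (S r)).
    destruct (gap q (k (S r))) as [d [Hd Hgap]]. unfold q; rewrite prefix_cons; discriminate.
    assert (Hb : forall N', zfin q N' <= x - d).
    { intros N'. specialize (Hgap N'). unfold q in Hgap. rewrite <- prefix_S in Hgap.
      specialize (S1 (S (S r)) (S (S N'))). unfold q. lra. }
    destruct (zs_bound q _ Hb) as [Z1 [Z2 _]].
    exists (zeta_star q). split; [|split].
    + exists q. split; auto. unfold q. rewrite prefix_cons. destruct Hk as [H0 [H1 _]].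
      split; auto. intros z [<-|Hz]. lia. apply (allge1_map k 1 r H1); auto.
    + lra.
    + pose proof (zfin_ext_mono (prefix k r) (k r :: nil) N). rewrite <- prefix_S in H. fold q in H.
      specialize (Z1 (S N)). rewrite Rabs_left1 by lra. lra.
  - subst x. destruct (small_pow eps He) as [K [HK1 HK2]].
    destruct (zs_bound (K :: nil) _ (fun N => zfin_single_bound K N HK1)) as [Z1 [Z2 _]].
    exists (zeta_star (K :: nil)). 
    assert (1 < zeta_star (K :: nil)).
    { specialize (Z1 2%nat). rewrite zfin_cons_S, zfin_1 in Z1. change (zfin nil 2) with 1 in Z1.
      pose proof (w_pos K 2 ltac:(lia)). change (/ INR 2 ^ K) with (w K 2) in Z1. lra. }
    split; [|split].
    + exists (K :: nil). split; auto. split; auto. intros z [<-|[]]. lia.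
    + lra.
    + rewrite Rabs_pos_eq by lra. lra.
Qed.

Lemma derived1 x : derived Zstar x <-> 1 <= x.
Proof.
  split.
  - intros H. apply Rnot_lt_le. intros Hlt. destruct (H (1 - x) ltac:(lra)) as [y [Hy [_ Hd]]].
    pose proof (Zstar_ge1 y Hy). apply Rabs_def2 in Hd. lra.
  - intros Hx eps He. apply approx; auto.
Qed.

Lemma derived_ray (C : R -> Prop) : (forall x, C x <-> 1 <= x) -> forall x, derived C x <-> 1 <= x.
Proof.
  intros HC x. split.
  - intros H. apply Rnot_lt_le. intros Hlt. destruct (H (1 - x) ltac:(lra)) as [y [Hy [_ Hd]]].
    apply HC in Hy. apply Rabs_def2 in Hd. lra.
  - intros Hx eps He. exists (x + eps / 2). split. apply HC; lra. split. lra.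
    rewrite Rabs_pos_eq; lra.
Qed.

Lemma derived_n_ray n : (1 <= n)%nat -> forall x, derived_n n Zstar x <-> 1 <= x.
Proof.
  induction n; intros Hn x. lia.
  destruct (Nat.eq_dec n 0) as [->|Hne]. apply derived1.
  simpl. apply derived_ray. apply IHn. lia.
Qed.

Theorem theorem1p3 :
  (* (i) *)
  (forall k, inT k ->
     exists l : R, is_lim_seq (fun r => zeta_star (prefix k r)) l /\ 1 < l) /\
  (* (ii) bijectivity of eta : T -> (1, +oo) *)
  (forall k m, inT k -> inT m -> eta k = eta m -> forall i, k i = m i) /\
  (forall x : R, 1 < x -> exists k, inT k /\ eta k = x) /\
  (* (ii) order reversal *)
  (forall k m, inT k -> inT m -> (succ_lex k m <-> eta m < eta k)) /\
  (* (iii) *)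
  (forall n : nat, (1 <= n)%nat ->
     forall x : R, derived_n n Zstar x <-> 1 <= x).
Proof.
  split. apply part_i.
  split. apply eta_inj.
  split. apply surj.
  split. apply order_iff.
  apply derived_n_ray.
Qed.
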